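(* Let $n\ge 2$ be an integer. For $i=1,2$ let $X_{i1},\dots,X_{in}$ be a random sample from the density $f(x\mid\mu_i,\sigma)=\frac{1}{\sigma}e^{-(x-\mu_i)/\sigma}$ for $x\ge\mu_i$ (and $0$ otherwise), the two samples independent, with $\underline{\theta}=(\mu_1,\mu_2,\sigma)\in\mathbb{R}^2\times(0,\infty)$ unknown. Let $X_i=\min_j X_{ij}$, $S=\sum_{i=1}^2\sum_{j=1}^n(X_{ij}-X_i)$, $Z_2=\max\{X_1,X_2\}$, and $\mu_M=\mu_1I(X_1\ge X_2)+\mu_2I(X_1<X_2)$. Consider the loss $L(\underline{\theta},a)=\left(\frac{a-\mu_M}{\sigma}\right)^2$, $a\in\mathbb{R}$, and the non-informative prior density $\pi(\mu_1,\mu_2,\sigma)=\frac{1}{\sigma}$ on $\mathbb{R}^2\times(0,\infty)$. Then the generalized Bayes estimator of $\mu_M$ with respect to this prior and loss is $$\delta_{k_2}=Z_2-\frac{S}{n(2n-1)}.$$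
   Context: $I(A)$ is the indicator of $A$. Given the observed data, the (formal) posterior density is proportional to prior times likelihood; for the sufficient statistic $(x_1,x_2,s)=(X_1,X_2,S)$ it is proportional to $\sigma^{-(2n+1)}e^{-n(x_1-\mu_1)/\sigma}e^{-n(x_2-\mu_2)/\sigma}e^{-s/\sigma}$ on $\{\mu_1\le x_1,\mu_2\le x_2,\sigma>0\}$. The generalized Bayes estimator is the action $a$ minimizing the posterior expected loss $\int\left(\frac{a-\mu_M}{\sigma}\right)^2\pi(\underline{\theta}\mid\text{data})\,d\underline{\theta}$ (with $\mu_M$ evaluated at the observed $X_1,X_2$), namely the ratio $\int \mu_M\sigma^{-2}\pi(\underline{\theta}\mid\text{data})d\underline{\theta}\big/\int\sigma^{-2}\pi(\underline{\theta}\mid\text{data})d\underline{\theta}$. *)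

(* Defs.v *)
From HB Require Import structures.
From mathcomp Require Import all_boot all_order all_algebra.
From mathcomp Require Import all_classical all_reals all_analysis.
Set Implicit Arguments. Unset Strict Implicit. Unset Printing Implicit Defensive.
Import Order.TTheory GRing.Theory Num.Theory.
Local Open Scope classical_set_scope.
Local Open Scope ring_scope.

(* Samples are indexed by nat; only the indices 0 <= j < n are used.
   Sample i (i = 1,2) is x_i 0, ..., x_i (n-1). *)

Section Model.
Variable R : realType.

Definition expdens (mu sigma x : R) : R :=
  if mu <= x then sigma^-1 * expR (- ((x - mu) / sigma)) else 0.

Definition smin (n : nat) (x : nat -> R) : R :=
  \big[Num.min/x 0%N]_(0 <= j < n) x j.

Definition Sstat (n : nat) (x1 x2 : nat -> R) : R :=
  \sum_(0 <= j < n) (x1 j - smin n x1) + \sum_(0 <= j < n) (x2 j - smin n x2).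

Definition Z2 (n : nat) (x1 x2 : nat -> R) : R := Num.max (smin n x1) (smin n x2).

Definition muM (n : nat) (x1 x2 : nat -> R) (mu1 mu2 : R) : R :=
  if smin n x2 <= smin n x1 then mu1 else mu2.

Definition loss (n : nat) (x1 x2 : nat -> R) (mu1 mu2 sigma a : R) : R :=
  ((a - muM n x1 x2 mu1 mu2) / sigma) ^+ 2.

Definition prior (mu1 mu2 sigma : R) : R := sigma^-1.

Definition lik (n : nat) (x1 x2 : nat -> R) (mu1 mu2 sigma : R) : R :=
  (\prod_(0 <= j < n) expdens mu1 sigma (x1 j)) *
  (\prod_(0 <= j < n) expdens mu2 sigma (x2 j)).

(* integral over the parameter space R^2 x (0,oo) w.r.t. Lebesgue measure,
   written as an iterated integral (sigma outermost) *)
Definition param_integral (g : R -> R -> R -> R) : \bar R :=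
  (\int[lebesgue_measure]_(sigma in [set s : R | (0 < s)%R])
     \int[lebesgue_measure]_(mu1 in [set: R])
       \int[lebesgue_measure]_(mu2 in [set: R]) (g mu1 mu2 sigma)%:E)%E.

Definition marginal (n : nat) (x1 x2 : nat -> R) : R :=
  fine (param_integral (fun mu1 mu2 sigma => prior mu1 mu2 sigma * lik n x1 x2 mu1 mu2 sigma)).

Definition posterior (n : nat) (x1 x2 : nat -> R) (mu1 mu2 sigma : R) : R :=
  prior mu1 mu2 sigma * lik n x1 x2 mu1 mu2 sigma / marginal n x1 x2.

Definition post_exp_loss (n : nat) (x1 x2 : nat -> R) (a : R) : \bar R :=
  param_integral (fun mu1 mu2 sigma =>
    loss n x1 x2 mu1 mu2 sigma a * posterior n x1 x2 mu1 mu2 sigma).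

Definition delta_k2 (n : nat) (x1 x2 : nat -> R) : R :=
  Z2 n x1 x2 - Sstat n x1 x2 / (n%:R * (2 * n%:R - 1)).

End Model.

(* Main.v *)
Require Import Defs.
From HB Require Import structures.
From mathcomp Require Import all_boot all_order all_algebra.
From mathcomp Require Import all_classical all_reals all_analysis.
From mathcomp Require Import ring lra measurable_realfun.
Import Order.TTheory GRing.Theory Num.Theory.
Import numFieldNormedType.Exports.
Local Open Scope classical_set_scope.
Local Open Scope ring_scope.


Section S.
Variable R : realType.
Lemma expRN_le (j : nat) (y : R) : 0 < y -> expR (- y) <= j.+1`!%:R / y ^+ j.+1.
Proof.
move=> y0.
rewrite expRN.
have h := @expR_ge1Dxn R y j (ltW y0).
have yp : 0 < y ^+ j.+1 / j.+1`!%:R by rewrite divr_gt0 ?exprn_gt0 ?ltr0n ?fact_gt0.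
rewrite -[_ / y ^+ _]invf_div lef_pV2 ?posrE ?expR_gt0 //.
by apply: le_trans h; rewrite lerDr.
Qed.

Lemma invy_cvg0 : (fun x : R => x^-1) @ +oo --> 0.
Proof.
apply/(@gtr0_cvgV0 _ _ _ _ (fun x : R => x)).
  by near=> x; near: x; exact: nbhs_pinfty_gt.
exact: cvg_id.
Unshelve. all: by end_near. Qed.

Lemma lim0_pexp (j : nat) (S : R) : 0 < S ->
  (fun s : R => (s^-1) ^+ j * expR (- (S / s))) @ 0^'+ --> 0.
Proof.
move=> S0.
set C := j.+1`!%:R / S ^+ j.+1.
apply: (@squeeze_cvgr _ _ _ _ (fun _ => 0) (fun s => C * s)).
- near=> s.
  have s0 : 0 < s by near: s; exact: nbhs_right_gt.
  apply/andP; split.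
    by rewrite mulr_ge0 ?expR_ge0 // exprn_ge0 // invr_ge0 ltW.
  have h := @expRN_le j (S / s) (divr_gt0 S0 s0).
  apply: le_trans (ler_wpM2l _ h) _.
    by rewrite exprn_ge0 // invr_ge0 ltW.
  rewrite /C expr_div_n exprSr.
  have sn0 : s != 0 by rewrite gt_eqF.
  have Sn0 : S ^+ j != 0 by rewrite expf_neq0 // gt_eqF.
  rewrite le_eqVlt; apply/orP; left; apply/eqP.
  rewrite exprVn exprSr.
  have un0 : s ^+ j != 0 by rewrite expf_neq0.
  move: un0 Sn0; set u := s ^+ j; set v := S ^+ j => un0 vn0.
  field.
  by rewrite un0 vn0 sn0 gt_eqF.
- exact: cvg_cst.
- apply: cvg_at_right_filter.
  rewrite -[X in _ --> X](mulr0 C).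
  apply: cvgMl_tmp; exact: cvg_id.
Unshelve. all: by end_near. Qed.

Lemma limy_pexp (j : nat) (c : R) : 0 < c ->
  (fun x : R => x ^+ j * expR (- (c * x))) @ +oo --> 0.
Proof.
move=> c0.
set C := j.+1`!%:R / c ^+ j.+1.
apply: (@squeeze_cvgr _ _ _ _ (fun _ => 0) (fun x => C * x^-1)).
- near=> x.
  have x0 : 0 < x by near: x; exact: nbhs_pinfty_gt.
  apply/andP; split.
    by rewrite mulr_ge0 ?expR_ge0 // exprn_ge0 // ltW.
  have h := @expRN_le j (c * x) (mulr_gt0 c0 x0).
  apply: le_trans (ler_wpM2l _ h) _.
    by rewrite exprn_ge0 // ltW.
  rewrite /C exprMn !exprSr.
  have xn0 : x != 0 by rewrite gt_eqF.
  have cn0 : c != 0 by rewrite gt_eqF.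
  rewrite le_eqVlt; apply/orP; left; apply/eqP.
  field.
  by rewrite xn0 cn0 !expf_neq0.
- exact: cvg_cst.
- rewrite -[X in _ --> X](mulr0 C).
  apply: cvgMl_tmp; exact: invy_cvg0.
Unshelve. all: by end_near. Qed.
End S.


Section C.
Variable R : realType.
Variable S : R.
Hypothesis S0 : 0 < S.

Definition ee (s : R) : R := if 0 < s then expR (- (S / s)) else 0.
Definition ff (j : nat) (s : R) : R := (s^-1) ^+ j * ee s.

Lemma is_derive_fext {f g : R -> R} {x df : R} :
  is_derive x 1 f df -> f =1 g -> is_derive x 1 g df.
Proof. by move=> h /funext <-. Qed.

Lemma is_derive_inv {s : R} : s != 0 -> is_derive s 1 (fun t : R => t^-1) (- (s ^+ 2)^-1).
Proof.
move=> s0.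
have h := @is_deriveV R (fun t => t) s 1 1 s0 (is_derive_id _ _).
apply: is_derive_eq h _.
by rewrite /= scaler1.
Qed.

Lemma is_derive_ee {s : R} : 0 < s -> is_derive s 1 ee (S * ff 2 s).
Proof.
move=> s0.
have e : \near s, (expR \o (fun t => - (S * t^-1))) s = ee s.
  near=> t.
  have t0 : 0 < t by near: t; exact: lt_nbhsr.
  by rewrite /ee t0.
apply: (near_eq_is_derive e).
have hi : is_derive s 1 (fun t : R => - (S * t^-1)) (S * (s ^+ 2)^-1).
  have h0 : is_derive s (1:R) (fun t : R => t^-1) (- (s ^+ 2)^-1) := is_derive_inv (negbT (gt_eqF s0)).
  have h1 : is_derive s (1:R) (- (S \*: (fun t : R => t^-1))) (- (S *: - (s ^+ 2)^-1)).
    exact: is_deriveN (is_deriveZ S h0).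
  have h2 : is_derive s 1 (fun t : R => - (S * t^-1)) (- (S *: - (s ^+ 2)^-1)).
    by apply: (is_derive_fext h1).
  apply: is_derive_eq h2 _.
  by rewrite /GRing.scale /= mulrN opprK.
have := is_derive1_comp (is_derive_expR _) hi.
move=> h; apply: is_derive_eq h _.
rewrite /ff /ee s0 /= exprVn.
rewrite /GRing.scale /=.
ring.
Unshelve. all: by end_near. Qed.

Lemma dmul {f g : R -> R} {x a b : R} : is_derive x 1 f a -> is_derive x 1 g b ->
  is_derive x 1 (fun t => f t * g t) (f x * b + g x * a).
Proof.
move=> hf hg.
have h := is_deriveM hf hg.
have h2 : is_derive x 1 (fun t => f t * g t) (f x *: b + g x *: a).
  by apply: (is_derive_fext h).
exact: h2.
Qed.

Lemma dadd {f g : R -> R} {x a b : R} : is_derive x 1 f a -> is_derive x 1 g b ->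
  is_derive x 1 (fun t => f t + g t) (a + b).
Proof.
move=> hf hg.
have h := is_deriveD hf hg.
by apply: (is_derive_fext h).
Qed.

Lemma dscale {f : R -> R} (k : R) {x a : R} : is_derive x 1 f a ->
  is_derive x 1 (fun t => k * f t) (k * a).
Proof.
move=> hf.
have h := is_deriveZ k hf.
have h2 : is_derive x 1 (fun t => k * f t) (k *: a) by apply: (is_derive_fext h).
exact: h2.
Qed.

Lemma dpow {f : R -> R} (j : nat) {x a : R} : is_derive x 1 f a ->
  is_derive x 1 (fun t => f t ^+ j) (j%:R * f x ^+ j.-1 * a).
Proof.
move=> hf.
have h := is_deriveX j hf.
have h2 : is_derive x 1 (fun t => f t ^+ j) ((j%:R * f x ^+ j.-1) *: a).
  apply: (is_derive_fext h) => t.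
  by rewrite exprfctE.
exact: h2.
Qed.

Lemma dext {f g : R -> R} {x a b : R} : is_derive x 1 f a -> f =1 g -> a = b ->
  is_derive x 1 g b.
Proof. by move=> h /funext <- <-. Qed.

Lemma is_derive_ff (j : nat) {s : R} : 0 < s ->
  is_derive s 1 (ff j) (S * ff j.+2 s - j%:R * ff j.+1 s).
Proof.
move=> s0.
have h0 : is_derive s (1:R) (fun t : R => t^-1) (- (s ^+ 2)^-1) := is_derive_inv (negbT (gt_eqF s0)).
have h := dmul (dpow j h0) (is_derive_ee s0).
apply: (dext h) => [t //|].
rewrite /ff.
have sn0 : s != 0 by rewrite gt_eqF.
clear h.
case: j => [|j] /=.
  by rewrite !expr0; ring.
rewrite !exprS expr0.
move: (s^-1 ^+ j) => u.
field.
by rewrite sn0.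
Qed.


Fixpoint GG (m : nat) (s : R) : R :=
  if m is m'.+1 then (ff m s + m%:R * GG m' s) / S else ee s / S.
Fixpoint ll (m : nat) : R := if m is m'.+1 then m%:R / S * ll m' else S^-1.

Lemma is_derive_GG (m : nat) {s : R} : 0 < s -> is_derive s 1 (GG m) (ff m.+2 s).
Proof.
move=> s0; elim: m => [|m IH] /=.
  apply: (dext (dscale S^-1 (is_derive_ee s0))) => [t|]; first by rewrite mulrC.
  by rewrite mulrA mulVf ?mul1r // gt_eqF.
have h := dscale S^-1 (dadd (is_derive_ff m.+1 s0) (dscale m.+1%:R IH)).
apply: (dext h) => [t|]; first by rewrite mulrC.
have Sn0 : S != 0 by rewrite gt_eqF.
field; exact: Sn0.
Qed.

Lemma ee0 : ee 0 = 0. Proof. by rewrite /ee ltxx. Qed.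
Lemma ff0 j : ff j 0 = 0. Proof. by rewrite /ff ee0 mulr0. Qed.
Lemma GG0 m : GG m 0 = 0.
Proof. by elim: m => [|m IH] /=; rewrite ?ee0 ?ff0 ?IH ?mulr0 ?addr0 ?mul0r. Qed.

Lemma cvg_pow {T : Type} {F : set_system T} {FF : Filter F} (f : T -> R) (a : R) (k : nat) :
  f @ F --> a -> (fun x => f x ^+ k) @ F --> a ^+ k.
Proof.
move=> hf; elim: k => [|k IH].
  under eq_fun do rewrite expr0. rewrite expr0; exact: cvg_cst.
under eq_fun do rewrite exprSr. rewrite exprSr.
exact: cvgM.
Qed.

Lemma ee_cvgy : ee s @[s --> +oo%R] --> (1:R).
Proof.
have e : {near +oo%R, (fun s => expR (- (S / s))) =1 ee}.
  near=> s.
  have s0 : 0 < s by near: s; exact: nbhs_pinfty_gt.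
  by rewrite /ee s0.
apply: cvg_trans (near_eq_cvg e) _.
rewrite -expR0.
apply: (cvg_comp (fun s => - (S / s)) expR); last exact: continuous_expR.
rewrite -oppr0 -(mulr0 S).
apply: cvgN; apply: cvgMl_tmp; exact: invy_cvg0.
Unshelve. all: by end_near. Qed.

Lemma ff_cvgy (j : nat) : ff j.+1 s @[s --> +oo%R] --> 0.
Proof.
rewrite -(mul0r 1).
have h : (fun s : R => (s^-1) ^+ j.+1) @ +oo --> 0.
  rewrite -[X in _ --> X](@expr0n R j.+1).
  apply: cvg_pow. exact: invy_cvg0.
exact: cvgM h ee_cvgy.
Qed.

Lemma GG_cvgy (m : nat) : GG m s @[s --> +oo%R] --> ll m.
Proof.
elim: m => [|m IH] /=.
  rewrite -[X in _ --> X](mul1r S^-1).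
  exact: cvgMr_tmp ee_cvgy.
have -> : m.+1%:R / S * ll m = (0 + m.+1%:R * ll m) / S by rewrite add0r; ring.
apply: cvgMr_tmp.
apply: cvgD; first exact: ff_cvgy.
exact: cvgMl_tmp IH.
Qed.

Lemma ff_cvg0 (j : nat) : ff j s @[s --> 0^'+] --> 0.
Proof.
have e : {near 0^'+, (fun s => (s^-1) ^+ j * expR (- (S / s))) =1 ff j}.
  near=> s.
  have s0 : 0 < s by near: s; exact: nbhs_right_gt.
  by rewrite /ff /ee s0.
apply: cvg_trans (near_eq_cvg e) _.
exact: lim0_pexp.
Unshelve. all: by end_near. Qed.

Lemma ee_cvg0 : ee s @[s --> 0^'+] --> 0.
Proof.
have := ff_cvg0 0.
apply: cvg_trans; apply: near_eq_cvg; near=> s.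
by rewrite /ff expr0 mul1r.
Unshelve. all: by end_near. Qed.

Lemma GG_cvg0 (m : nat) : GG m s @[s --> 0^'+] --> 0.
Proof.
elim: m => [|m IH] /=.
  rewrite -[X in _ --> X](mul0r S^-1).
  exact: cvgMr_tmp ee_cvg0.
rewrite -[X in _ --> X](mul0r S^-1).
apply: cvgMr_tmp.
rewrite -[X in _ --> X](addr0 0).
apply: cvgD; first exact: ff_cvg0.
rewrite -[X in _ --> X](mulr0 m.+1%:R).
exact: cvgMl_tmp IH.
Qed.


Lemma SIG (m : nat) (A B C : R) (f : R -> R) :
  (forall s : R, 0 < s -> f s = A * ff m.+4 s + B * ff m.+3 s + C * ff m.+2 s) ->
  (forall s : R, 0 < s -> 0 <= f s) ->
  (\int[lebesgue_measure]_(s in [set s : R | (0 < s)%R]) (f s)%:E =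
    (A * ll m.+2 + B * ll m.+1 + C * ll m)%:E)%E.
Proof.
move=> fE f0.
pose g := fun s => A * ff m.+4 s + B * ff m.+3 s + C * ff m.+2 s.
pose F := fun s => A * GG m.+2 s + B * GG m.+1 s + C * GG m s.
have dF : forall s : R, 0 < s -> is_derive s 1 F (g s).
  move=> s s0.
  exact: dadd (dadd (dscale A (is_derive_GG m.+2 s0)) (dscale B (is_derive_GG m.+1 s0)))
              (dscale C (is_derive_GG m s0)).
have dg : forall s : R, 0 < s -> derivable g s 1.
  move=> s s0.
  have h := dadd (dadd (dscale A (is_derive_ff m.+4 s0)) (dscale B (is_derive_ff m.+3 s0)))
              (dscale C (is_derive_ff m.+2 s0)).
  by case: h.
have cg : forall s : R, 0 < s -> {for s, continuous g}.
  move=> s s0; apply: differentiable_continuous.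
  by apply/derivable1_diffP; exact: dg.
have -> : (\int[lebesgue_measure]_(s in [set s : R | (0 < s)%R]) (f s)%:E =
    \int[lebesgue_measure]_(s in [set s : R | (0 < s)%R]) (g s)%:E)%E.
  by apply: eq_integral => s; rewrite inE /= => s0; rewrite fE.
have -> : [set s : R | 0 < s] = `]0, +oo[%classic.
  by apply/seteqP; split => x /=; rewrite in_itv /= andbT.
rewrite integral_itv_obnd_cbnd; last first.
  apply/measurable_EFinP; apply: open_continuous_measurable_fun.
    exact: interval_open.
  by move=> x; rewrite inE /= in_itv /= andbT => x0; exact: cg.
have g0 : g 0 = 0 by rewrite /g !ff0 !mulr0 !addr0.
have F0 : F 0 = 0 by rewrite /F !GG0 !mulr0 !addr0.
have e0 : A * 0 + B * 0 + C * 0 = 0 :> R by rewrite !mulr0 !addr0.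
rewrite (@ge0_continuous_FTC2y _ g F 0 (A * ll m.+2 + B * ll m.+1 + C * ll m)).
- by rewrite F0 sube0.
- move=> x; rewrite le_eqVlt => /predU1P[<-|x0]; first by rewrite g0.
  by rewrite /g -fE // f0.
- apply/continuous_within_itvcyP; split.
    by move=> x; rewrite in_itv /= andbT => x0; exact: cg.
  rewrite g0 -[X in _ --> X]e0.
  apply: cvgD; first apply: cvgD.
  + exact: cvgMl_tmp (ff_cvg0 _).
  + exact: cvgMl_tmp (ff_cvg0 _).
  + exact: cvgMl_tmp (ff_cvg0 _).
- apply: cvgD; first apply: cvgD.
  + exact: cvgMl_tmp (GG_cvgy _).
  + exact: cvgMl_tmp (GG_cvgy _).
  + exact: cvgMl_tmp (GG_cvgy _).
- by move=> x x0; case: (dF x x0).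
- rewrite F0 -[X in _ --> X]e0.
  apply: cvgD; first apply: cvgD.
  + exact: cvgMl_tmp (GG_cvg0 _).
  + exact: cvgMl_tmp (GG_cvg0 _).
  + exact: cvgMl_tmp (GG_cvg0 _).
- move=> x; rewrite in_itv /= andbT => x0.
  by rewrite derive1E; case: (dF x x0) => _ ->.
Qed.

End C.
Arguments is_derive_fext {R f g x df}.
Arguments dmul {R f g x a b}.
Arguments dadd {R f g x a b}.
Arguments dscale {R f} k {x a}.
Arguments dpow {R f} j {x a}.
Arguments dext {R f g x a b}.
Arguments is_derive_inv {R s}.


Section M.
Variable R : realType.

Lemma dcst (k x : R) : is_derive x 1 (fun _ : R => k) 0.
Proof. exact: is_derive_cst. Qed.
Lemma did (x : R) : is_derive x 1 (fun t : R => t) 1.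
Proof. exact: is_derive_id. Qed.
Lemma dopp {f : R -> R} {x a : R} : is_derive x 1 f a -> is_derive x 1 (fun t => - f t) (- a).
Proof. by move=> h; apply: (is_derive_fext (is_deriveN h)). Qed.

Lemma MU (p q b c X : R) (F : R -> R) : 0 < c -> 0 <= p -> 0 <= q ->
  (forall mu, F mu = if mu <= X then (p + q * (b - mu) ^+ 2) * expR (c * (mu - X)) else 0) ->
  (\int[lebesgue_measure]_(mu in [set: R]) (F mu)%:E =
    (p / c + q / c * ((b - X) ^+ 2 + 2 * (b - X) / c + 2 / c ^+ 2))%:E)%E.
Proof.
move=> c0 p0 q0 FE.
have cn0 : c != 0 by rewrite gt_eqF.
pose g := fun mu : R => (p + q * (b - mu) ^+ 2) * expR (c * (mu - X)).
have g0 : forall mu, 0 <= g mu.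
  by move=> mu; rewrite mulr_ge0 ?expR_ge0 // addr_ge0 // mulr_ge0 // sqr_ge0.
have dg : forall x, derivable g x 1.
  move=> x.
  have h1 : is_derive x 1 (fun t : R => b - t) (0 - 1).
    by apply: (dext (dadd (dcst b x) (dopp (did x)))).
  have h2 := dadd (is_derive_cst p x 1) (dscale q (dpow 2 h1)).
  have h3 : is_derive x 1 (fun t : R => c * (t - X)) (c * (1 + - 0)).
    by apply: (dext (dscale c (dadd (did x) (dopp (dcst X x))))).
  have h4 := is_derive1_comp (is_derive_expR _) h3.
  by case: (dmul h2 h4).
have cg : continuous g.
  by move=> x; apply: differentiable_continuous; apply/derivable1_diffP; exact: dg.
transitivity (\int[lebesgue_measure]_(mu in `]-oo, X]) (g mu)%:E)%E.
  rewrite [RHS]integral_mkcond.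
  apply: eq_integral => mu _.
  rewrite patchE FE; case: (leP mu X) => h.
    by rewrite mem_set //= in_itv /= h.
  by rewrite memNset //= in_itv /= leNgt h.
rewrite -[X in `]-oo, X]](opprK X).
rewrite ge0_integration_by_substitutionNy; last 2 first.
  exact: continuous_subspaceT.
  by move=> x _; exact: g0.
pose P := fun t : R => p / c + q * (c^-1 * (b + t) ^+ 2 + (2 / c ^+ 2) * (b + t) + 2 / c ^+ 3).
pose FF := fun t : R => - (expR (c * (- t - X)) * P t).
have dF : forall x : R, is_derive x 1 FF ((g \o -%R) x).
  move=> x.
  have hA : is_derive x 1 (fun t : R => c * (- t - X)) (c * (- 1 + - 0)).
    by apply: (dext (dscale c (dadd (dopp (did x)) (dopp (dcst X x))))).
  have hE := is_derive1_comp (is_derive_expR _) hA.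
  have hB : is_derive x 1 (fun t : R => b + t) (0 + 1) by exact: (dadd (dcst b x) (did x)).
  have hP := dadd (dcst (p / c) x) (dscale q (dadd (dadd (dscale c^-1 (dpow 2 hB))
                (dscale (2 / c ^+ 2) hB)) (dcst (2 / c ^+ 3) x))).
  apply: (dext (dopp (dmul hE hP))) => [t //|].
  rewrite /g /P /=.
  have -> : - x - X = - x - X by [].
  have -> : b - - x = b + x by rewrite opprK.
  field; exact: cn0.
have dgN : forall x : R, derivable (g \o -%R) x 1.
  move=> x.
  have h := is_derive1_comp (derivableP (dg (- x))) (is_deriveNid x 1).
  by case: h.
rewrite (@ge0_continuous_FTC2y _ (g \o -%R) FF (- X) 0).
- rewrite sub0e -EFinN; congr EFin.
  rewrite /FF /P opprK.
  have -> : c * (- - X - X) = 0 by rewrite opprK subrr mulr0.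
  rewrite expR0 mul1r.
  field; exact: cn0.
- by move=> x _; exact: g0.
- apply: continuous_subspaceT => x.
  by apply: differentiable_continuous; apply/derivable1_diffP; exact: dgN.
- have -> : FF = fun x => - expR (- (c * X)) *
     ((p / c + q * (c^-1 * b ^+ 2 + 2 / c ^+ 2 * b + 2 / c ^+ 3)) * (x ^+ 0 * expR (- (c * x))) +
      (q * (2 * b / c + 2 / c ^+ 2)) * (x ^+ 1 * expR (- (c * x))) +
      (q / c) * (x ^+ 2 * expR (- (c * x)))).
    apply/funext => x; rewrite /FF /P.
    have -> : c * (- x - X) = - (c * X) + - (c * x) by ring.
    rewrite expRD.
    move: (expR (- (c * X))) (expR (- (c * x))) => e1 e2.
    field; exact: cn0.
  have e0 : - expR (- (c * X)) * ((p / c + q * (c^-1 * b ^+ 2 + 2 / c ^+ 2 * b + 2 / c ^+ 3)) * 0 +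
      (q * (2 * b / c + 2 / c ^+ 2)) * 0 + (q / c) * 0) = 0 by rewrite !mulr0 !addr0 mulr0.
  rewrite -[X in _ --> X]e0.
  apply: cvgMl_tmp.
  apply: cvgD; first apply: cvgD.
  + exact: cvgMl_tmp (@limy_pexp R 0 c c0).
  + exact: cvgMl_tmp (@limy_pexp R 1 c c0).
  + exact: cvgMl_tmp (@limy_pexp R 2 c c0).
- by move=> x _; case: (dF x).
- apply: cvg_at_right_filter.
  by apply: differentiable_continuous; apply/derivable1_diffP; case: (dF (- X)).
- move=> x _.
  by rewrite derive1E; case: (dF x) => _ ->.
Qed.
End M.


Section A.
Variable R : realType.
Implicit Types x : nat -> R.

Lemma bmin_le (z : R) x (r : seq nat) j : j \in r -> \big[Num.min/z]_(i <- r) x i <= x j.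
Proof.
elim: r => [//|a r IH]; rewrite inE big_cons /= => /orP[/eqP ->|jr].
  by rewrite ge_min lexx.
by rewrite ge_min IH // orbT.
Qed.

Lemma bmin_att (z : R) x (r : seq nat) :
  \big[Num.min/z]_(i <- r) x i = z \/ exists2 j, j \in r & \big[Num.min/z]_(i <- r) x i = x j.
Proof.
elim: r => [|a r IH]; first by left; rewrite big_nil.
rewrite big_cons /=.
case: (leP (x a) (\big[Num.min/z]_(i <- r) x i)) => h.
  by right; exists a; rewrite ?inE ?eqxx.

case: IH => [->|[j jr ->]]; first by left.
by right; exists j => //; rewrite inE jr orbT.
Qed.

Lemma smin_le {n} x {j} : (j < n)%N -> smin n x <= x j.
Proof. by move=> jn; apply: bmin_le; rewrite mem_index_iota. Qed.

Lemma smin_att {n} x : (0 < n)%N -> exists j, (j < n)%N /\ x j = smin n x.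
Proof.
move=> n0; case: (bmin_att (x 0%N) x (index_iota 0 n)) => [h|[j jr h]].
  by exists 0%N; split => //; rewrite /smin h.
by exists j; split; [move: jr; rewrite mem_index_iota|rewrite /smin h].
Qed.

Lemma expdens_ge0 (mu s y : R) : 0 < s -> 0 <= expdens mu s y.
Proof.
move=> s0; rewrite /expdens; case: ifP => // _.
by rewrite mulr_ge0 ?expR_ge0 // invr_ge0 ltW.
Qed.

Lemma prod_expdens_ge0 n x (mu s : R) : 0 < s -> 0 <= \prod_(0 <= j < n) expdens mu s (x j).
Proof. by move=> s0; apply: prodr_ge0 => j _; exact: expdens_ge0. Qed.

Definition Ssum n x := \sum_(0 <= j < n) (x j - smin n x).

Lemma prod_expdens n x (mu s : R) : (0 < n)%N -> 0 < s ->
  \prod_(0 <= j < n) expdens mu s (x j) =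
  if mu <= smin n x then
    (s^-1) ^+ n * expR (- (Ssum n x / s)) * expR (n%:R / s * (mu - smin n x))
  else 0.
Proof.
move=> n0 s0.
have sn0 : s != 0 by rewrite gt_eqF.
case: ifPn => hmu.
  rewrite (eq_big_nat _ _ (F2 := fun j => s^-1 * expR (- ((x j - mu) / s)))); last first.
    move=> j /andP[_ jn]; rewrite /expdens ifT //.
    exact: le_trans hmu (smin_le x jn).
  rewrite big_split /= prodr_const_nat subn0 -mulrA -expRD -expR_sum.
  congr (_ * _).
  congr expR.
  rewrite /Ssum.
  have -> : \sum_(0 <= i < n) - ((x i - mu) / s) =
     \sum_(0 <= i < n) (- ((x i - smin n x) / s) + s^-1 * (mu - smin n x)).
    by apply: eq_bigr => j _; field.
  rewrite big_split /= sumr_const_nat subn0 sumrN -mulr_suml -mulr_natr.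
  by field; exact: sn0.
have [j [jn xj]] := smin_att x n0.
rewrite (big_cat_nat (n:=j)) //=; last exact: ltnW.
rewrite (big_ltn jn) /= {2}/expdens xj.
by rewrite ifF ?mul0r ?mulr0 //; exact: negbTE.
Qed.
End A.


Section D.
Variable R : realType.
Variable k : nat.
Variables x1 x2 : nat -> R.
Local Notation n := k.+2.
Local Notation X1 := (smin n x1).
Local Notation X2 := (smin n x2).
Local Notation S1 := (Ssum R n x1).
Local Notation S2 := (Ssum R n x2).
Definition EE (Si s : R) := (s^-1) ^+ n * expR (- (Si / s)).

Lemma EE_ge0 Si s : 0 < s -> 0 <= EE Si s.
Proof. by move=> s0; rewrite /EE mulr_ge0 ?expR_ge0 // exprn_ge0 // invr_ge0 ltW. Qed.

Lemma hk2 : (2 + k%:R : R) != 0.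
Proof. by rewrite gt_eqF // ltr_pwDr // ler0n. Qed.

Lemma nR0 : 0 < n%:R :> R. Proof. by rewrite ltr0n. Qed.
Lemma cpos {s : R} : 0 < s -> 0 < n%:R / s. Proof. by move=> s0; rewrite divr_gt0 // nR0. Qed.

Lemma inner_marg (s : R) : 0 < s ->
  (\int[lebesgue_measure]_(mu1 in [set: R])
     \int[lebesgue_measure]_(mu2 in [set: R])
       (prior mu1 mu2 s * lik n x1 x2 mu1 mu2 s)%:E =
   (s^-1 * EE S1 s * EE S2 s / (n%:R / s) ^+ 2)%:E)%E.
Proof.
move=> s0.
have sn0 : s != 0 by rewrite gt_eqF.
have nn0 : n%:R != 0 :> R by rewrite gt_eqF // nR0.
transitivity (\int[lebesgue_measure]_(mu1 in [set: R])
   ((s^-1 * \prod_(0 <= j < n) expdens mu1 s (x1 j) * EE S2 s) / (n%:R / s))%:E)%E.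
  apply: eq_integral => mu1 _.
  rewrite (@MU R (s^-1 * \prod_(0 <= j < n) expdens mu1 s (x1 j) * EE S2 s) 0 0 (n%:R / s) X2).
  - by rewrite mul0r mul0r addr0.
  - exact: cpos.
  - apply: mulr_ge0; last exact: EE_ge0.
    apply: mulr_ge0; last exact: prod_expdens_ge0.
    by rewrite invr_ge0 ltW.
  - by [].
  - move=> mu2; rewrite /prior /lik (@prod_expdens R n x2) //.
    case: ifP => _; last by rewrite !mulr0.
    rewrite /EE; ring.
rewrite (@MU R (s^-1 * EE S1 s * EE S2 s / (n%:R / s)) 0 0 (n%:R / s) X1).
- rewrite mul0r mul0r addr0; congr EFin; field; by rewrite sn0 hk2.
- exact: cpos.
- apply: mulr_ge0; last by rewrite invr_ge0 ltW // cpos.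
  apply: mulr_ge0; last exact: EE_ge0.
  apply: mulr_ge0; last exact: EE_ge0.
  by rewrite invr_ge0 ltW.
- by [].
- move=> mu1; rewrite (@prod_expdens R n x1) //.
  case: ifP => _; last by rewrite !(mulr0, mul0r).
  rewrite /EE; field; by rewrite sn0 hk2.
Qed.

Local Notation S := (Sstat n x1 x2).
Hypothesis hS : 0 < Sstat n x1 x2.
Local Notation m := (k + k).+1.

Lemma SE : S = S1 + S2. Proof. by []. Qed.

Lemma expRS (s : R) : expR (- (S / s)) = expR (- (S1 / s)) * expR (- (S2 / s)).
Proof. by rewrite -expRD SE; congr expR; ring. Qed.

Lemma ffE j (s : R) : 0 < s -> ff R S j s = (s^-1) ^+ j * (expR (- (S1 / s)) * expR (- (S2 / s))).
Proof. by move=> s0; rewrite /ff /ee s0 expRS. Qed.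

Lemma marg_param :
  param_integral (fun mu1 mu2 s => prior mu1 mu2 s * lik n x1 x2 mu1 mu2 s) =
  (n%:R^-2 * ll R S m)%:E.
Proof.
rewrite /param_integral.
transitivity (\int[lebesgue_measure]_(s in [set s : R | (0 < s)%R])
   (s^-1 * EE S1 s * EE S2 s / (n%:R / s) ^+ 2)%:E)%E.
  by apply: eq_integral => s; rewrite inE /= => s0; exact: inner_marg.
rewrite (@SIG R S hS m 0 0 (n%:R^-2) (fun s => s^-1 * EE S1 s * EE S2 s / (n%:R / s) ^+ 2)).
- by rewrite !mul0r !add0r.
- move=> s s0.
  have sn0 : s != 0 by rewrite gt_eqF.
  rewrite !ffE // /EE !exprS exprD.
  move: ((s^-1) ^+ k) (expR (- (S1 / s))) (expR (- (S2 / s))) => w e1 e2.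
  field; by rewrite sn0 hk2.
- move=> s s0.
  apply: mulr_ge0; last by rewrite invr_ge0 exprn_ge0 // ltW // cpos.
  apply: mulr_ge0; last exact: EE_ge0.
  apply: mulr_ge0; last exact: EE_ge0.
  by rewrite invr_ge0 ltW.
Qed.

Lemma ll_pos j : 0 < ll R S j.
Proof.
elim: j => [|j IH] /=; first by rewrite invr_gt0.
by rewrite mulr_gt0 // divr_gt0 // ltr0n.
Qed.

Local Notation M := (marginal n x1 x2).

Lemma M_val : M = n%:R^-2 * ll R S m.
Proof. by rewrite /marginal marg_param. Qed.

Lemma M_pos : 0 < M.
Proof. by rewrite M_val mulr_gt0 ?ll_pos // invr_gt0 exprn_gt0 // nR0. Qed.

Lemma Dge0 (d c : R) : 0 < c -> 0 <= d ^+ 2 + 2 * d / c + 2 / c ^+ 2.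
Proof.
move=> c0; have cn0 : c != 0 by rewrite gt_eqF.
have -> : d ^+ 2 + 2 * d / c + 2 / c ^+ 2 = (d + c^-1) ^+ 2 + (c^-1) ^+ 2.
  by field.
by rewrite addr_ge0 // sqr_ge0.
Qed.

Local Notation Z := (Z2 n x1 x2).

Definition fl (b s : R) : R :=
  (s^-1) ^+ 2 * s^-1 * EE S1 s * EE S2 s / M / (n%:R / s) ^+ 2 *
  ((b - Z) ^+ 2 + 2 * (b - Z) / (n%:R / s) + 2 / (n%:R / s) ^+ 2).

Lemma inner_loss (b s : R) : 0 < s ->
  (\int[lebesgue_measure]_(mu1 in [set: R])
     \int[lebesgue_measure]_(mu2 in [set: R])
       (loss n x1 x2 mu1 mu2 s b * posterior n x1 x2 mu1 mu2 s)%:E = (fl b s)%:E)%E.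
Proof.
move=> s0.
have sn0 : s != 0 by rewrite gt_eqF.
have Mn0 : M != 0 by rewrite gt_eqF // M_pos.
have Mi0 : 0 <= M^-1 by rewrite invr_ge0 ltW // M_pos.
have si0 : 0 <= s^-1 by rewrite invr_ge0 ltW.
have c0 := cpos s0.
case: (leP X2 X1) => h.
  have ZE : Z = X1 by rewrite /Z2 max_l.
  transitivity (\int[lebesgue_measure]_(mu1 in [set: R])
   ((((b - mu1) / s) ^+ 2 * s^-1 * \prod_(0 <= j < n) expdens mu1 s (x1 j) * EE S2 s / M)
      / (n%:R / s))%:E)%E.
    apply: eq_integral => mu1 _.
    rewrite (@MU R (((b - mu1) / s) ^+ 2 * s^-1 * \prod_(0 <= j < n) expdens mu1 s (x1 j) * EE S2 s / M)
       0 0 (n%:R / s) X2 (fun mu2 => loss n x1 x2 mu1 mu2 s b * posterior n x1 x2 mu1 mu2 s)).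
    - by rewrite !mul0r addr0.
    - exact: c0.
    - apply: mulr_ge0 => //; apply: mulr_ge0; last exact: EE_ge0.
      apply: mulr_ge0; last exact: prod_expdens_ge0.
      by apply: mulr_ge0 => //; exact: sqr_ge0.
    - by [].
    - move=> mu2; rewrite /loss /muM /posterior /prior /lik ifT; last exact: h.
      rewrite (@prod_expdens R n x2) //.
      case: ifP => _; last by rewrite !(mulr0, mul0r).
      rewrite /EE; field; by rewrite sn0 Mn0.
  rewrite (@MU R 0 ((s^-1) ^+ 2 * s^-1 * EE S1 s * EE S2 s / M / (n%:R / s)) b (n%:R / s) X1).
  - rewrite /fl ZE; congr EFin; field; by rewrite sn0 Mn0 hk2.
  - exact: c0.
  - by [].
  - apply: mulr_ge0; last by rewrite invr_ge0 ltW.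
    apply: mulr_ge0 => //; apply: mulr_ge0; last exact: EE_ge0.
    apply: mulr_ge0; last exact: EE_ge0.
    by rewrite mulr_ge0 // exprn_ge0.
  - move=> mu1; rewrite (@prod_expdens R n x1) //.
    case: ifP => _; last by rewrite !(mulr0, mul0r).
    rewrite /EE; field; by rewrite sn0 Mn0 hk2.
have ZE : Z = X2 by rewrite /Z2 max_r // ltW.
pose D2 := (b - X2) ^+ 2 + 2 * (b - X2) / (n%:R / s) + 2 / (n%:R / s) ^+ 2.
have D20 : 0 <= D2 by exact: Dge0.
transitivity (\int[lebesgue_measure]_(mu1 in [set: R])
   (((s^-1) ^+ 2 * s^-1 * \prod_(0 <= j < n) expdens mu1 s (x1 j) * EE S2 s / M)
      / (n%:R / s) * D2)%:E)%E.
  apply: eq_integral => mu1 _.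
  rewrite (@MU R 0 ((s^-1) ^+ 2 * s^-1 * \prod_(0 <= j < n) expdens mu1 s (x1 j) * EE S2 s / M)
     b (n%:R / s) X2 (fun mu2 => loss n x1 x2 mu1 mu2 s b * posterior n x1 x2 mu1 mu2 s)).
  - by rewrite !mul0r add0r.
  - exact: c0.
  - by [].
  - apply: mulr_ge0 => //; apply: mulr_ge0; last exact: EE_ge0.
    apply: mulr_ge0; last exact: prod_expdens_ge0.
    by rewrite mulr_ge0 // exprn_ge0.
  - move=> mu2; rewrite /loss /muM /posterior /prior /lik ifF; last by apply/negbTE; rewrite -ltNge.
    rewrite (@prod_expdens R n x2) //.
    case: ifP => _; last by rewrite !(mulr0, mul0r).
    rewrite /EE; field; by rewrite sn0 Mn0.
rewrite (@MU R ((s^-1) ^+ 2 * s^-1 * EE S1 s * EE S2 s / M / (n%:R / s) * D2) 0 0 (n%:R / s) X1).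
- rewrite /fl ZE -/D2; congr EFin; field; by rewrite sn0 Mn0 hk2.
- exact: c0.
- apply: mulr_ge0 => //.
  apply: mulr_ge0; last by rewrite invr_ge0 ltW.
  apply: mulr_ge0 => //; apply: mulr_ge0; last exact: EE_ge0.
  apply: mulr_ge0; last exact: EE_ge0.
  by rewrite mulr_ge0 // exprn_ge0.
- by [].
- move=> mu1; rewrite (@prod_expdens R n x1) //.
  case: ifP => _; last by rewrite !(mulr0, mul0r).
  rewrite /EE; field; by rewrite sn0 Mn0 hk2.
Qed.

Definition QA b := (b - Z) ^+ 2 / (M * n%:R ^+ 2).
Definition QB b := 2 * (b - Z) / (M * n%:R ^+ 3).
Definition QC := 2 / (M * n%:R ^+ 4).
Definition Q b := QA b * ll R S m.+2 + QB b * ll R S m.+1 + QC * ll R S m.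

Lemma pel_val b : post_exp_loss n x1 x2 b = (Q b)%:E.
Proof.
rewrite /post_exp_loss /param_integral.
transitivity (\int[lebesgue_measure]_(s in [set s : R | (0 < s)%R]) (fl b s)%:E)%E.
  by apply: eq_integral => s; rewrite inE /= => s0; exact: inner_loss.
have Mn0 : M != 0 by rewrite gt_eqF // M_pos.
rewrite (@SIG R S hS m (QA b) (QB b) QC (fl b)) //.
- move=> s s0.
  have sn0 : s != 0 by rewrite gt_eqF.
  rewrite /fl /QA /QB /QC !ffE // /EE !exprS exprD.
  move: ((s^-1) ^+ k) (expR (- (S1 / s))) (expR (- (S2 / s))) => w e1 e2.
  field; by rewrite sn0 Mn0 hk2.
- move=> s s0; rewrite /fl.
  have c0 := cpos s0.
  apply: mulr_ge0; last exact: Dge0.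
  apply: mulr_ge0; last by rewrite invr_ge0 exprn_ge0 // ltW.
  apply: mulr_ge0; last by rewrite invr_ge0 ltW // M_pos.
  apply: mulr_ge0; last exact: EE_ge0.
  apply: mulr_ge0; last exact: EE_ge0.
  by rewrite mulr_ge0 ?exprn_ge0 // invr_ge0 ltW.
Qed.

Lemma Q_key b : Q b = (m.+2)%:R * (m.+1)%:R / S ^+ 2 * (b - delta_k2 n x1 x2) ^+ 2 +
                      Q (delta_k2 n x1 x2).
Proof.
have Sn0 : S != 0 by rewrite gt_eqF.
have lln0 : ll R S m != 0 by rewrite gt_eqF // ll_pos.
have e2 : ll R S m.+2 = m.+2%:R / S * (m.+1%:R / S * ll R S m) by [].
have e1 : ll R S m.+1 = m.+1%:R / S * ll R S m by [].
rewrite /Q /QA /QB /QC /delta_k2 e2 e1 M_val.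
move: (ll R S m) lln0 => L Ln0.
rewrite -!natr1 !natrD.
have k0 : 0 <= k%:R :> R := ler0n _ _.
have h1 : (k%:R + 1 + 1 : R) != 0 by rewrite gt_eqF //; lra.
have h2 : (2 * (k%:R + 1 + 1) - 1 : R) != 0 by rewrite gt_eqF //; lra.
field; by rewrite h1 Ln0 Sn0 h2.
Qed.

Lemma main_k a :
  (forall b : R, (post_exp_loss n x1 x2 a <= post_exp_loss n x1 x2 b)%E)
  <-> a = delta_k2 n x1 x2.
Proof.
have K0 : 0 < (m.+2)%:R * (m.+1)%:R / S ^+ 2 :> R.
  by rewrite divr_gt0 ?exprn_gt0 // mulr_gt0 // ltr0n.
split.
- move=> H; have := H (delta_k2 n x1 x2); rewrite !pel_val lee_fin (Q_key a) gerDr => h.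
  have t0 : (a - delta_k2 n x1 x2) ^+ 2 = 0.
    apply/eqP; rewrite eq_le; apply/andP; split; last exact: sqr_ge0.
    by rewrite -(pmulr_rle0 _ K0).
  by move/eqP: t0; rewrite sqrf_eq0 subr_eq0 => /eqP.
- move=> -> b; rewrite !pel_val lee_fin (Q_key b) lerDr.
  apply: mulr_ge0; last exact: sqr_ge0.
  exact: (ltW K0).
Qed.

End D.

Theorem theorem3p2 (R : realType) (n : nat) (x1 x2 : nat -> R) :
  (2 <= n)%N -> 0 < Sstat n x1 x2 ->
  forall a : R,
    (forall b : R, (post_exp_loss n x1 x2 a <= post_exp_loss n x1 x2 b)%E)
    <-> a = delta_k2 n x1 x2.
Proof.
case: n => [|[|k]] hn.
- by [].
- by [].
move=> hS a.
exact: (@main_k R k x1 x2 hS a).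
Qed.
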